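(* Consider the Wiener system $$x_{k+1}=Ax_k+Bu_k,\qquad y_k=\phi(Cx_k+Du_k),$$ with $A\in\mathbb{R}^{n\times n}$, $B\in\mathbb{R}^{n\times m}$, $C\in\mathbb{R}^{1\times n}$, $D\in\mathbb{R}^{1\times m}$, where $(A,B)$ is controllable and $(A,C)$ is observable, and $\phi:\mathbb{R}\to\mathbb{R}^p$ is a bijection whose inverse satisfies $\phi^{-1}(y)=\sum_{i=1}^q b_i\tilde\phi_i(y)$ for all $y\in\mathbb{R}^p$, for known functions $\tilde\phi_i:\mathbb{R}^p\to\mathbb{R}$ and real coefficients $b_i$. Suppose $\{u_k,y_k\}_{k=0}^{N-1}$ is a trajectory of this system and $u$ is persistently exciting of order $L+n$. Define $z_k=(\tilde\phi_1(y_k),\dots,\tilde\phi_q(y_k))^\top$ for $k=0,\dots,N-1$. Let $\{\bar u_k,\bar y_k\}_{k=0}^{L-1}$ be an input-output sequence and define $\bar z_k=(\tilde\phi_1(\bar y_k),\dots,\tilde\phi_q(\bar y_k))^\top$. If there exists $\alpha\in\mathbb{R}^{N-L+1}$ such that $$\begin{bmatrix}H_L(u)\\ H_L(z)\end{bmatrix}\alpha=\begin{bmatrix}\bar u_{[0,L-1]}\\ \bar z_{[0,L-1]}\end{bmatrix},$$ then $\{\bar u_k,\bar y_k\}_{k=0}^{L-1}$ is a trajectory of the Wiener system.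
   Context: For a sequence $\{x_k\}_{k=0}^{N-1}$ with $x_k\in\mathbb{R}^d$ and $1\le L\le N$, the Hankel matrix $H_L(x)\in\mathbb{R}^{dL\times(N-L+1)}$ has $(i,j)$ block $x_{i+j}$ ($i=0,\dots,L-1$, $j=0,\dots,N-L$); $x_{[a,b]}$ is the stacked vector $(x_a^\top,\dots,x_b^\top)^\top$. The sequence is persistently exciting of order $L$ if $\operatorname{rank}H_L(x)=dL$. An input-output sequence $\{u_k,y_k\}_{k=0}^{N-1}$ is a trajectory of the Wiener system if there exist an initial state $\bar x\in\mathbb{R}^n$ and states $\{x_k\}_{k=0}^{N}$ with $x_0=\bar x$ satisfying the system equations for $k=0,\dots,N-1$. *)

(* Defs.v *)
From HB Require Import structures.
From mathcomp Require Import all_boot all_order all_algebra.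
Set Implicit Arguments. Unset Strict Implicit. Unset Printing Implicit Defensive.
Import Order.TTheory GRing.Theory Num.Theory.
Local Open Scope ring_scope.

Lemma modord_proof (d L : nat) (r : 'I_(L * d)) : (r %% d < d)%N.
Proof.
case: d r => [|d] r; last by rewrite ltn_mod.
by case: r => r; rewrite muln0.
Qed.

Definition modord (d L : nat) (r : 'I_(L * d)) : 'I_d := Ordinal (modord_proof r).

(* Stacked vector x_[0,L-1] = (x_0^T, ..., x_(L-1)^T)^T; row r = i*d + c holds (x_i)_c. *)
Definition stackv (R : Type) (d L : nat) (x : nat -> 'cV[R]_d) : 'cV[R]_(L * d) :=
  \col_(r < L * d) x (r %/ d)%N (modord r) 0.

Definition hankel (R : Type) (d L N : nat) (x : nat -> 'cV[R]_d)
  : 'M[R]_(L * d, N - L + 1) :=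
  \matrix_(r < L * d, j < N - L + 1) x (r %/ d + j)%N (modord r) 0.

Definition pers_exc (R : fieldType) (d L N : nat) (x : nat -> 'cV[R]_d) : bool :=
  \rank (hankel L N x) == (L * d)%N.

Definition ctrb_mx (R : pzRingType) (n m : nat) (A : 'M[R]_n) (B : 'M[R]_(n, m))
  : 'M[R]_(n, n * m) :=
  \matrix_(r < n, c < n * m) ((A ^+ (c %/ m)%N) *m B) r (modord c).

Definition obsv_mx (R : pzRingType) (n : nat) (A : 'M[R]_n) (C : 'M[R]_(1, n))
  : 'M[R]_(n, n) :=
  \matrix_(r < n, c < n) (C *m A ^+ r) 0 c.

Definition controllable (R : fieldType) (n m : nat) (A : 'M[R]_n) (B : 'M[R]_(n, m)) : bool :=
  \rank (ctrb_mx A B) == n.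

Definition observable (R : fieldType) (n : nat) (A : 'M[R]_n) (C : 'M[R]_(1, n)) : bool :=
  \rank (obsv_mx A C) == n.

Definition wiener_traj (R : pzRingType) (n m p : nat) (A : 'M[R]_n) (B : 'M[R]_(n, m))
  (C : 'M[R]_(1, n)) (D : 'M[R]_(1, m)) (phi : R -> 'cV[R]_p)
  (N : nat) (u : nat -> 'cV[R]_m) (y : nat -> 'cV[R]_p) : Prop :=
  exists (xbar : 'cV[R]_n) (x : nat -> 'cV[R]_n),
    x 0%N = xbar /\
    forall k, (k < N)%N ->
      x k.+1 = A *m x k + B *m u k /\ y k = phi ((C *m x k + D *m u k) 0 0).

Definition zseq (R : Type) (p q : nat) (phit : 'I_q -> 'cV[R]_p -> R)
  (y : nat -> 'cV[R]_p) : nat -> 'cV[R]_q :=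
  fun k => \col_(i < q) phit i (y k).

(* Main.v *)
Require Import Defs.
From HB Require Import structures.
From mathcomp Require Import all_boot all_order all_algebra.
From mathcomp Require Import zify.
Import Order.TTheory GRing.Theory Num.Theory.
Local Open Scope ring_scope.

Lemma hankel_mul (R : fieldType) d L N (x xb : nat -> 'cV[R]_d) (a : 'cV[R]_(N-L+1)) :
  hankel L N x *m a = stackv L xb ->
  forall k, (k < L)%N -> xb k = \sum_(j < N-L+1) a j 0 *: x (k + j)%N.
Proof.
move=> E k kL; apply/matrixP => c i; rewrite (ord1 i).
have hc := ltn_ord c.
have rlt : (k * d + c < L * d)%N by nia.
have := congr1 (fun M : 'M[R]_(L * d, 1) => M (Ordinal rlt) 0) E.
have hdiv : ((k * d + c) %/ d = k)%N.
  by rewrite divnMDl ?divn_small ?addn0 //; lia.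
have hmod : modord (Ordinal rlt) = c.
  by apply: val_inj => /=; rewrite modnMDl modn_small.
rewrite !mxE /= hdiv hmod => <-; rewrite summxE; apply: eq_bigr => j _.
by rewrite !mxE hdiv hmod mulrC.
Qed.

Theorem proposition3 (R : realFieldType) (n m p q : nat)
  (A : 'M[R]_n) (B : 'M[R]_(n, m)) (C : 'M[R]_(1, n)) (D : 'M[R]_(1, m))
  (phi : R -> 'cV[R]_p) (phiinv : 'cV[R]_p -> R)
  (phit : 'I_q -> 'cV[R]_p -> R) (b : 'I_q -> R)
  (N L : nat) (u : nat -> 'cV[R]_m) (y : nat -> 'cV[R]_p)
  (ubar : nat -> 'cV[R]_m) (ybar : nat -> 'cV[R]_p) :
  controllable A B ->
  observable A C ->
  cancel phi phiinv -> cancel phiinv phi ->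
  (forall yy : 'cV[R]_p, phiinv yy = \sum_(i < q) b i * phit i yy) ->
  (1 <= L)%N -> (L + n <= N)%N ->
  wiener_traj A B C D phi N u y ->
  pers_exc (L + n) N u ->
  (exists alpha : 'cV[R]_(N - L + 1),
     col_mx (hankel L N u) (hankel L N (zseq phit y)) *m alpha
     = col_mx (stackv L ubar) (stackv L (zseq phit ybar))) ->
  wiener_traj A B C D phi L ubar ybar.
Proof.
move=> _ _ phiK phiinvK Hinv L1 LN [xb0 [x [_ Hx]]] _ [a].
rewrite mul_col_mx => /eq_col_mx [Eu Ez].
have Hu := @hankel_mul _ _ _ _ _ _ _ Eu; have Hz := @hankel_mul _ _ _ _ _ _ _ Ez.
have lt k (j : 'I_(N - L + 1)) : (k < L)%N -> (k + j < N)%N.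
  by move=> kL; have := ltn_ord j; lia.
pose xb k := \sum_(j < N - L + 1) a j 0 *: x (k + j)%N.
exists (xb 0%N), xb; split => // k kL; split.
  rewrite (Hu k kL) /xb !mulmx_sumr -big_split; apply: eq_bigr => j _.
  by rewrite addSn (Hx _ (lt k j kL)).1 scalerDr !scalemxAr.
rewrite -[ybar k]phiinvK; congr phi.
rewrite Hinv.
transitivity (\sum_(i < q) b i * (zseq phit ybar k) i 0).
  by apply: eq_bigr => i _; rewrite mxE.
rewrite (Hz k kL) (Hu k kL) /xb !mulmx_sumr -big_split /= summxE.
under eq_bigr => i _ do rewrite summxE big_distrr.
rewrite exchange_big; apply: eq_bigr => j _.
rewrite -!scalemxAr -scalerDr [RHS]mxE.
under eq_bigr => i _ do rewrite mxE /zseq mxE.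
have [_ ->] := Hx _ (lt k j kL); set v := (C *m _ + _) 0 0.
rewrite -[in RHS](phiK v) Hinv big_distrr /=.
by apply: eq_bigr => i _; rewrite mulrCA.
Qed.
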